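(* Let $F_a(x,u,\partial u,\ldots,\partial^Nu)=0$, $a=1,\ldots,M$, be a system of differential equations for $u=(u^1,\ldots,u^m)$ with solution space $\mathcal{E}$, admitting an adjoint-symmetry $Q^a(x,u,\partial u,\ldots,\partial^su)$, i.e. $(\delta^*_QF)_\alpha|_{\mathcal{E}}=0$, and let $P^\alpha(x,u,\partial u,\ldots,\partial^ru)$ be the characteristic of a local symmetry, i.e. $(\delta_PF)_a|_{\mathcal{E}}=0$. Let $L=v^aF_a$ with auxiliary variables $v^a$, and let $\Phi^i(P;L)$ be the Noether conserved current of the extended Euler–Lagrange system $F_a=0$, $(\delta^*_vF)_\alpha=0$ associated with the extension of the symmetry, defined through $\delta_P L = P^\alpha E_{u^\alpha}(L)+D_i\Phi^i(P;L)$ (Fréchet derivative in $u$ only, explicitly $\Phi^i(P;L)=\Psi^i(P,v;F)$). Then $\Phi^i(P;L)|_{v=Q}$ is equivalent to (indeed equal to) the conserved current $\Psi^i(P,Q;F)$ given by the adjoint-symmetry/symmetry formula $$Q^a(\delta_PF)_a-P^\alpha(\delta^*_QF)_\alpha=D_i\Psi^i(P,Q;F),$$ and $D_i\Psi^i(P,Q;F)|_{\mathcal{E}}=0$.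
   Context: Independent variables $x=(x^1,\ldots,x^n)$, dependent variables $u=(u^1,\ldots,u^m)$; summation over repeated indices. Jet coordinates $u^\alpha_I$ for multi-indices $I$; $D_i$ is the total derivative, $D_I=D_{i_1}\cdots D_{i_k}$, $|I|=k$. ''On $\mathcal{E}$'' means evaluated using the system and its differential consequences. Fréchet derivative $(\delta_wF)_a=\sum_I(D_Iw^\alpha)\partial F_a/\partial u^\alpha_I$; adjoint $(\delta^*_vF)_\alpha=\sum_I(-1)^{|I|}D_I(v^a\partial F_a/\partial u^\alpha_I)$; Euler operator $E_{u^\alpha}(f)=\sum_I(-1)^{|I|}D_I(\partial f/\partial u^\alpha_I)$. The vector $$\Psi^i(w,v;F)=\sum_{k\ge1}\sum_{|J|+|K|=k-1}(-1)^{|K|}(D_Jw^\alpha)\,D_K\Big(v^a\frac{\partial F_a}{\partial u^\alpha_{JKi}}\Big).$$ A symmetry generator $\xi^i\partial_{x^i}+\eta^\alpha\partial_{u^\alpha}$ has characteristic $P^\alpha=\eta^\alpha-\xi^iu^\alpha_i$. In the paper's terminology a system admitting an adjoint-symmetry is called ''nonlinearly self-adjoint'' in the general sense. *)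

(* Defs.v *)
From Stdlib Require Import Reals.
From Coquelicot Require Import Coquelicot.
From mathcomp Require Import all_boot.

Set Implicit Arguments.
Unset Strict Implicit.
Unset Printing Implicit Defensive.

Local Open Scope R_scope.

Notation "\rsum_ ( i <- r ) F" := (\big[Rplus/R0]_(i <- r) F)
  (at level 41, F at level 41, i, r at level 50).
Notation "\rsum_ ( i < n ) F" := (\big[Rplus/R0]_(i < n) F)
  (at level 41, F at level 41, i, n at level 50).
Notation "\rsum_ ( i : T ) F" := (\big[Rplus/R0]_(i : T) F)
  (at level 41, F at level 41, i at level 50).

Section Jets.

(* n = number of independent variables x^1..x^n,
   p = number of dependent variables (jet coordinates u^beta_kappa). *)
Variables n p : nat.

(* Unordered multi-indices, as count vectors kappa : 'I_n -> nat. *)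
Definition mi := {ffun 'I_n -> nat}.
Definition mabs (k : mi) : nat := (\sum_(i < n) k i)%N.
Definition mi0 : mi := [ffun => 0%N].
Definition mi_add (k : mi) (i : 'I_n) : mi := [ffun j => (k j + (j == i))%N].
Definition mi_cnt (s : seq 'I_n) : mi := [ffun j => count_mem j s].
Definition mi_seq (k : mi) : seq 'I_n := flatten [seq nseq (k i) i | i <- enum 'I_n].
Definition mnom (s : seq 'I_n) : nat :=
  ((size s)`! %/ \prod_(i < n) (count_mem i s)`!)%N.

(* Jet coordinates: x^i (inl i), and u^beta_kappa (inr (beta, kappa)). *)
Definition coord := ('I_n + 'I_p * mi)%type.
Definition jet := coord -> R.
Definition dfun := jet -> R.

Definition upd (z : jet) (c : coord) (t : R) : jet :=
  fun c' => if c' == c then t else z c'.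

Definition pd (c : coord) (f : dfun) : dfun :=
  fun z => Derive (fun t => f (upd z c t)) (z c).

Definition iter_pd (cs : seq coord) (f : dfun) : dfun := foldr pd f cs.

(* The total derivative vector field D_i = d/dx^i + u^beta_{kappa+i} d/du^beta_kappa,
   evaluated at the jet point z. *)
Definition tvec (i : 'I_n) (z : jet) : jet :=
  fun c => match c with
           | inl j => if j == i then 1 else 0
           | inr (b, k) => z (inr (b, mi_add k i))
           end.

Definition Dt (i : 'I_n) (f : dfun) : dfun :=
  fun z => Derive (fun t => f (fun c => z c + t * tvec i z c)) 0.

Definition DI (s : seq 'I_n) (f : dfun) : dfun := foldr Dt f s.
Definition DK (k : mi) (f : dfun) : dfun := DI (mi_seq k) f.

Definition dep_ord (K : nat) (f : dfun) : Prop :=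
  forall z z' : jet,
    (forall i, z (inl i) = z' (inl i)) ->
    (forall b (k : mi), (mabs k <= K)%N -> z (inr (b, k)) = z' (inr (b, k))) ->
    f z = f z'.

Definition smooth_ord (K : nat) (f : dfun) : Prop :=
  forall cs : seq coord,
    (forall (z : jet) (c : coord),
        ex_derive (fun t => iter_pd cs f (upd z c t)) (z c)) /\
    (forall (z : jet) (eps : R), 0 < eps ->
       exists del : R, 0 < del /\
         forall z' : jet,
           (forall i, Rabs (z' (inl i) - z (inl i)) < del) ->
           (forall b (k : mi), (mabs k <= K)%N ->
               Rabs (z' (inr (b, k)) - z (inr (b, k))) < del) ->
           Rabs (iter_pd cs f z' - iter_pd cs f z) < eps).

Definition diff_fun_ord (K : nat) (f : dfun) : Prop := dep_ord K f /\ smooth_ord K f.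
Definition diff_fun (f : dfun) : Prop := exists K, diff_fun_ord K f.

(* The "u" variables u^1..u^m among the p dependent variables, via emb. *)
Variables (m M : nat) (emb : 'I_m -> 'I_p).

(* partial derivative d f / d u^alpha_I for an ORDERED multi-index I
   (symmetric convention: the derivative w.r.t. the coordinate u^alpha_[I],
    divided by the number of distinct orderings of I) *)
Definition pdU (a : 'I_m) (s : seq 'I_n) (f : dfun) : dfun :=
  fun z => pd (inr (emb a, mi_cnt s)) f z / INR (mnom s).

(* All sums over multi-indices are truncated at order N (the order of F). *)
Variable N : nat.

Definition frech1 (w : 'I_m -> dfun) (f : dfun) : dfun :=
  fun z => \rsum_(al < m) \rsum_(k < N.+1) \rsum_(I : k.-tuple 'I_n)
             (DI I (w al) z * pdU al I f z).

Definition frech (w : 'I_m -> dfun) (F : 'I_M -> dfun) (a : 'I_M) : dfun :=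
  frech1 w (F a).

Definition adj (v : 'I_M -> dfun) (F : 'I_M -> dfun) (al : 'I_m) : dfun :=
  fun z => \rsum_(k < N.+1) \rsum_(I : k.-tuple 'I_n)
             ((-1) ^ k * DI I (fun z' => \rsum_(a < M) (v a z' * pdU al I (F a) z')) z).

Definition euler (f : dfun) (al : 'I_m) : dfun :=
  fun z => \rsum_(k < N.+1) \rsum_(I : k.-tuple 'I_n)
             ((-1) ^ k * DI I (pdU al I f) z).

(* Psi^i(w, v; F) =
   sum_{k>=1} sum_{|J|+|K|=k-1} (-1)^{|K|} (D_J w^alpha) D_K (v^a dF_a/du^alpha_{JKi});
   here k.+1 plays the role of the paper's k, |J| = j, |K| = k - j. *)
Definition Psi (w : 'I_m -> dfun) (v : 'I_M -> dfun) (F : 'I_M -> dfun)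
    (i : 'I_n) : dfun :=
  fun z => \rsum_(k < N) \rsum_(j < k.+1)
           \rsum_(J : j.-tuple 'I_n) \rsum_(K : (k - j).-tuple 'I_n) \rsum_(al < m)
             ((-1) ^ (k - j) * DI J (w al) z *
              DI K (fun z' => \rsum_(a < M)
                               (v a z' * pdU al (J ++ K ++ [:: i]) (F a) z')) z).

End Jets.

Section OnE.
Variables n p M : nat.
(* g vanishes on the solution space E of F_a = 0: at every jet point where
   all the differential consequences D_J F_a vanish. *)
Definition onE (F : 'I_M -> dfun n p) (g : dfun n p) : Prop :=
  forall z : jet n p, (forall (a : 'I_M) (J : seq 'I_n), DI J (F a) z = 0) -> g z = 0.
End OnE.

Section Extended.
Variables n m M : nat.

Definition proj_u (z : jet n (m + M)) : jet n m :=
  fun c => match c with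
           | inl i => z (inl i)
           | inr (al, k) => z (inr (lshift M al, k))
           end.

Definition liftU (f : dfun n m) : dfun n (m + M) := fun z => f (proj_u z).

Definition vcoord (a : 'I_M) : dfun n (m + M) :=
  fun z => z (inr (rshift m a, mi0 n)).

Definition substQ (Q : 'I_M -> dfun n m) (z : jet n m) : jet n (m + M) :=
  fun c => match c with
           | inl i => z (inl i)
           | inr (b, k) => match split b with
                           | inl al => z (inr (al, k))
                           | inr a => DK k (Q a) z
                           end
           end.

Definition Lag (F : 'I_M -> dfun n m) : dfun n (m + M) :=
  fun z => \rsum_(a < M) (vcoord a z * liftU (F a) z).

Definition Phi (N : nat) (P : 'I_m -> dfun n m) (F : 'I_M -> dfun n m) (i : 'I_n)
  : dfun n (m + M) :=
  Psi (lshift M) N (fun al => liftU (P al)) vcoord (fun a => liftU (F a)) i.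

End Extended.

(* Main.v *)
Require Import Defs.
From Stdlib Require Import Reals.
From Stdlib Require Import Lra FunctionalExtensionality List.
From Coquelicot Require Import Coquelicot.
From mathcomp Require Import all_boot.
From HB Require Import structures.
Local Open Scope R_scope.

Module Aux.
Set Implicit Arguments.
Unset Strict Implicit.
Unset Printing Implicit Defensive.

Lemma RpA : associative Rplus. Proof. move=> x y z; ring. Qed.
Lemma RpC : commutative Rplus. Proof. move=> x y; ring. Qed.
Lemma Rp0 : left_id R0 Rplus. Proof. move=> x; ring. Qed.
HB.instance Definition _ := Monoid.isComLaw.Build R R0 Rplus RpA RpC Rp0.
Lemma Rm0l (x : R) : R0 * x = R0. Proof. ring. Qed.
Lemma Rm0r (x : R) : x * R0 = R0. Proof. ring. Qed.
HB.instance Definition _ := Monoid.isMulLaw.Build R R0 Rmult Rm0l Rm0r.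
Lemma Rdl : left_distributive Rmult Rplus. Proof. move=> x y z; ring. Qed.
Lemma Rdr : right_distributive Rmult Rplus. Proof. move=> x y z; ring. Qed.
HB.instance Definition _ := Monoid.isAddLaw.Build R Rmult Rplus Rdl Rdr.

Section Calc.
Variables n p : nat.
Local Notation jet := (jet n p).
Local Notation dfun := (dfun n p).
Local Notation coord := (coord n p).

Lemma upd_same (z : jet) c t : upd z c t c = t.
Proof. by rewrite /upd eqxx. Qed.
Lemma upd_other (z : jet) c c' t : c' != c -> upd z c t c' = z c'.
Proof. by rewrite /upd => /negbTE ->. Qed.
Lemma upd_upd (z : jet) c s t : upd (upd z c s) c t = upd z c t.
Proof. apply: functional_extensionality => c'; rewrite /upd; by case: (c' == c). Qed.
Lemma upd_id (z : jet) c : upd z c (z c) = z.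
Proof. apply: functional_extensionality => c'; rewrite /upd; by case: eqP => [->|]. Qed.
Lemma upd_comm (z : jet) c d s t : c != d -> upd (upd z c s) d t = upd (upd z d t) c s.
Proof.
move=> cd; apply: functional_extensionality => c'; rewrite /upd.
case: eqP => [->|//]; by rewrite eq_sym (negbTE cd).
Qed.

Definition ordc (c : coord) : nat := match c with inl _ => 0%N | inr (_, k) => mabs k end.

Lemma dep_ordE K (f : dfun) (z z' : jet) : dep_ord K f ->
  (forall c, (ordc c <= K)%N -> z c = z' c) -> f z = f z'.
Proof.
move=> H E; apply: H => [i|b k hk]; first by apply: E.
by apply: (E (inr (b, k))).
Qed.

Lemma iter_pd_cat (cs ds : seq coord) (f : dfun) : iter_pd (cs ++ ds) f = iter_pd cs (iter_pd ds f).
Proof. by rewrite /iter_pd foldr_cat. Qed.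

Lemma exd_any K (f : dfun) : smooth_ord K f -> forall (cs : seq coord) (z : jet) c s,
  ex_derive (fun t => iter_pd cs f (upd z c t)) s.
Proof.
move=> H cs z c s; have [H1 _] := H cs.
have := H1 (upd z c s) c; rewrite upd_same.
apply: ex_derive_ext => t; by rewrite upd_upd.
Qed.

Lemma pd_upd (f : dfun) (z : jet) c s : pd c f (upd z c s) = Derive (fun t => f (upd z c t)) s.
Proof.
rewrite /pd upd_same; f_equal; apply: functional_extensionality => t; by rewrite upd_upd.
Qed.

Lemma cont_ord K (f : dfun) : smooth_ord K f -> forall (cs : seq coord) (z : jet) eps, 0 < eps ->
  exists del, 0 < del /\ forall z' : jet, (forall c, Rabs (z' c - z c) < del) ->
   Rabs (iter_pd cs f z' - iter_pd cs f z) < eps.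
Proof.
move=> H cs z eps he; have [_ H2] := H cs.
have [del [hd Hd]] := H2 z eps he; exists del; split => // z' hz.
apply: Hd => [i|b k _]; [exact: (hz (inl i))| exact: (hz (inr (b,k)))].
Qed.

Definition lineL (z d : jet) (L : seq coord) (t : R) : jet :=
  fun c => z c + t * (if c \in L then d c else 0).

Lemma lineL0 z d L : lineL z d L 0 = z.
Proof. apply: functional_extensionality => c; rewrite /lineL; lra. Qed.

Lemma sum_abs_le (d : jet) (L : seq coord) c : c \in L ->
  Rabs (d c) <= \rsum_(c' <- L) Rabs (d c').
Proof.
elim: L => [//|a L IH]; rewrite in_cons big_cons => /orP [/eqP ->|h].
- have: 0 <= \rsum_(c' <- L) Rabs (d c').
    elim: L {IH} => [|b L' IH']; rewrite ?big_nil ?big_cons; [lra|].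
    have := Rabs_pos (d b); lra.
  lra.
- have := IH h; have := Rabs_pos (d a); lra.
Qed.

Lemma sum_abs_ge0 (d : jet) (L : seq coord) : 0 <= \rsum_(c' <- L) Rabs (d c').
Proof.
elim: L => [|b L' IH']; rewrite ?big_nil ?big_cons; [lra|].
have := Rabs_pos (d b); lra.
Qed.

Lemma line_deriv K (f : dfun) (Hf : smooth_ord K f) (z d : jet) (L : seq coord) :
  uniq L ->
  derivable_pt_lim (fun t => f (lineL z d L t)) 0 (\rsum_(c <- L) d c * pd c f z).
Proof.
elim: L => [_|a L IH] /=.
  rewrite big_nil.
  have E : (fun t => f (lineL z d [::] t)) = fun _ => f z.
    apply: functional_extensionality => t; f_equal.
    apply: functional_extensionality => c; rewrite /lineL in_nil; lra.
  rewrite E; exact: derivable_pt_lim_const.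
move=> /andP [aL uL]; rewrite big_cons.
have IH' := IH uL.
have EL : forall t, lineL z d (a :: L) t = upd (lineL z d L t) a (z a + t * d a).
  move=> t; apply: functional_extensionality => c; rewrite /lineL /upd in_cons.
  case: eqP => [->|/eqP ne] /=; first by [].
  by [].
have La : forall t, lineL z d L t a = z a.
  move=> t; rewrite /lineL (negbTE aL); lra.
move=> eps heps.
have he2 : 0 < eps / 2 by lra.
have [d1 Hd1] := IH' _ he2.
set B := 1 + \rsum_(c' <- a :: L) Rabs (d c').
have hB : 0 < B by have := sum_abs_ge0 d (a :: L); rewrite /B; lra.
have hA : 0 < 1 + Rabs (d a) by have := Rabs_pos (d a); lra.
have he3 : 0 < eps / 2 / (1 + Rabs (d a)) by apply: Rdiv_lt_0_compat.
have [d2 [hd2 Hd2]] := cont_ord Hf [:: a] z he3.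
have hd2B : 0 < d2 / B by apply: Rdiv_lt_0_compat.
exists (mkposreal _ (Rmin_pos _ _ (cond_pos d1) hd2B)) => h hne /= hh.
have hh1 : Rabs h < d1 by have := Rmin_l d1 (d2 / B); lra.
have hh2 : Rabs h < d2 / B by have := Rmin_r d1 (d2 / B); lra.
have := Hd1 h hne hh1; rewrite !Rplus_0_l lineL0 => I1.
rewrite EL lineL0.
set W := lineL z d L h.
set phi := fun s => f (upd W a s).
have dphi : forall s, is_derive phi s (pd a f (upd W a s)).
  move=> s; rewrite pd_upd; apply: Derive_correct.
  have := exd_any Hf [::] W a s; by [].
have [xi [hxi Exi]] : exists xi, Rmin (z a) (z a + h * d a) <= xi <= Rmax (z a) (z a + h * d a) /\
   phi (z a + h * d a) - phi (z a) = pd a f (upd W a xi) * (z a + h * d a - z a).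
  apply: (MVT_gen phi (z a) (z a + h * d a) (fun s => pd a f (upd W a s))).
    by move=> x _; apply: dphi.
  move=> x _; apply: derivable_continuous_pt.
  exists (pd a f (upd W a x)); apply/is_derive_Reals; apply: dphi.
have Ephi0 : phi (z a) = f W by rewrite /phi -(La h) upd_id.
have Hxi : forall c, Rabs (upd W a xi c - z c) < d2.
  move=> c; rewrite /upd; case: eqP => [->|/eqP ne].
  - have : Rabs (xi - z a) <= Rabs (h * d a).
      move: hxi; rewrite /Rmin /Rmax; destruct (Rle_dec (z a) (z a + h * d a)) ; move=> [hx1 hx2];
      rewrite /Rabs; destruct (Rcase_abs (xi - z a)); destruct (Rcase_abs (h * d a)); lra.
    rewrite Rabs_mult => H1.
    have H2 : Rabs (d a) <= B.
      have hc0 : a \in (a :: L : seq coord) := mem_head a L.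
      have := sum_abs_le d hc0; rewrite /B; lra.
    have : Rabs h * Rabs (d a) <= Rabs h * B by apply: Rmult_le_compat_l => //; apply: Rabs_pos.
    have : Rabs h * B < d2.
      have := Rmult_lt_compat_r B _ _ hB hh2. by rewrite /Rdiv Rmult_assoc Rinv_l ?Rmult_1_r; lra.
    lra.
  - rewrite /W /lineL.
    have -> : z c + h * (if c \in L then d c else 0) - z c = h * (if c \in L then d c else 0) by ring.
    rewrite Rabs_mult.
    have H2 : Rabs (if c \in L then d c else 0) <= B.
      case: ifP => hc.
      + have hc' : c \in (a :: L : seq coord) by rewrite in_cons hc orbT.
        have := sum_abs_le d hc'; rewrite /B; lra.
      + rewrite Rabs_R0; lra.
    have : Rabs h * Rabs (if c \in L then d c else 0) <= Rabs h * B
      by apply: Rmult_le_compat_l => //; apply: Rabs_pos.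
    have : Rabs h * B < d2.
      have := Rmult_lt_compat_r B _ _ hB hh2. by rewrite /Rdiv Rmult_assoc Rinv_l ?Rmult_1_r; lra.
    lra.
have C2 := Hd2 _ Hxi; rewrite /= in C2.
have E1 : (f (upd W a (z a + h * d a)) - f z) / h - (d a * pd a f z + \rsum_(c <- L) d c * pd c f z)
  = d a * (pd a f (upd W a xi) - pd a f z) + ((f W - f z) / h - \rsum_(c <- L) d c * pd c f z).
  have : f (upd W a (z a + h * d a)) = f W + pd a f (upd W a xi) * (h * d a).
    rewrite -Ephi0; move: Exi; rewrite /phi (_ : z a + h * d a - z a = h * d a); [lra|ring].
  move=> ->; field; exact: hne.
rewrite E1.
apply: Rle_lt_trans; first exact: Rabs_triang.
rewrite Rabs_mult.
have : Rabs (d a) * Rabs (pd a f (upd W a xi) - pd a f z) <= Rabs (d a) * (eps / 2 / (1 + Rabs (d a))).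
  apply: Rmult_le_compat_l; [exact: Rabs_pos| lra].
have : Rabs (d a) * (eps / 2 / (1 + Rabs (d a))) < eps / 2.
  have -> : Rabs (d a) * (eps / 2 / (1 + Rabs (d a))) = eps / 2 * (Rabs (d a) / (1 + Rabs (d a))) by field; lra.
  have : Rabs (d a) / (1 + Rabs (d a)) < 1.
    apply/Rlt_div_l; lra.
  move=> h1; have := Rmult_lt_compat_l (eps/2) _ _ he2 h1; lra.
move: I1; rewrite -/W => I1; lra.
Qed.


Definition cst (a : R) : dfun := fun _ => a.
Definition crd (c : coord) : dfun := fun z => z c.

Lemma pd_cst a c : pd c (cst a) = cst 0.
Proof. apply: functional_extensionality => z; rewrite /pd /cst; exact: Derive_const. Qed.

Lemma pd_crd c0 c : pd c (crd c0) = cst (if c0 == c then 1 else 0).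
Proof.
apply: functional_extensionality => z; rewrite /pd /crd /cst /upd.
case: (c0 =P c) => [e|_]; last exact: Derive_const.
subst c0.
apply: is_derive_unique; exact: (is_derive_id (K := R_AbsRing)).
Qed.

Lemma dep_pd K (f : dfun) c : dep_ord K f -> dep_ord K (pd c f).
Proof.
move=> H z z' H1 H2.
have E : forall c', (ordc c' <= K)%N -> z c' = z' c'.
  by case=> [i _|[b k] hk]; [exact: H1| exact: H2].
have Eu : forall t c', (ordc c' <= K)%N -> upd z c t c' = upd z' c t c'.
  move=> t c' h; rewrite /upd; case: eqP => [_|_]; [by []| exact: E].
rewrite /pd.
case: (leqP (ordc c) K) => hc.
- rewrite (E c hc); f_equal; apply: functional_extensionality => t; apply: (dep_ordE H); exact: Eu.
- have C1 : forall w : jet, (fun t => f (upd w c t)) = fun _ => f w.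
    move=> w; apply: functional_extensionality => t; apply: (dep_ordE H) => c' hc'.
    rewrite /upd; case: eqP => // e; subst c'.
    by rewrite leqNgt hc in hc'.
  by rewrite !C1 !Derive_const.
Qed.

Lemma dep_mono K K' (f : dfun) : (K <= K')%N -> dep_ord K f -> dep_ord K' f.
Proof.
move=> hK H z z' H1 H2; apply: H => // b k hk; apply: H2; exact: leq_trans hk hK.
Qed.

Lemma smooth_mono K K' (f : dfun) : (K <= K')%N -> smooth_ord K f -> smooth_ord K' f.
Proof.
move=> hK H cs; have [H1 H2] := H cs; split => // z eps he.
have [del [hd Hd]] := H2 z eps he; exists del; split => // z' h1 h2.
apply: Hd => // b k hk; apply: h2; exact: leq_trans hk hK.
Qed.

Lemma dfo_mono K K' (f : dfun) : (K <= K')%N -> diff_fun_ord K f -> diff_fun_ord K' f.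
Proof. move=> hK [H1 H2]; split; [exact: dep_mono H1| exact: smooth_mono H2]. Qed.

Lemma dfo_pd K (f : dfun) c : diff_fun_ord K f -> diff_fun_ord K (pd c f).
Proof.
move=> [H1 H2]; split; first exact: dep_pd.
move=> cs; have := H2 (cs ++ [:: c]); by rewrite iter_pd_cat.
Qed.

Definition smooth_all (f : dfun) : Prop :=
  (forall (z : jet) c s, ex_derive (fun t => f (upd z c t)) s) /\
  (forall (z : jet) eps, 0 < eps -> exists del, 0 < del /\
     forall z' : jet, (forall c, Rabs (z' c - z c) < del) -> Rabs (f z' - f z) < eps).

Lemma smooth_all_iter K (f : dfun) : smooth_ord K f -> forall cs, smooth_all (iter_pd cs f).
Proof.
move=> H cs; split; [exact: exd_any H cs| exact: cont_ord H cs].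
Qed.

Inductive SOP K : dfun -> Prop :=
| SOP0 : SOP K (cst 0)
| SOPc f g h : diff_fun_ord K f -> diff_fun_ord K g -> SOP K h ->
    SOP K (fun z => f z * g z + h z).

Lemma SOP_smooth K h : SOP K h -> smooth_all h.
Proof.
elim=> [|f g h' Hf Hg _ [IH1 IH2]].
  split; first by move=> *; exact: ex_derive_const.
  move=> z eps he; exists 1; split; [lra|] => z' _; rewrite /cst Rminus_diag Rabs_R0 //.
have [Ef Cf] := smooth_all_iter Hf.2 [::].
have [Eg Cg] := smooth_all_iter Hg.2 [::].
rewrite /= in Ef Cf Eg Cg.
split.
  move=> z c s; apply: (ex_derive_plus (K := R_AbsRing) (V := R_NormedModule)); last exact: IH1.
  apply: ex_derive_mult; [exact: Ef| exact: Eg].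
move=> z eps he.
set A := Rabs (f z) + 1; set B := Rabs (g z) + 1.
have hA : 0 < A by rewrite /A; have := Rabs_pos (f z); lra.
have hB : 0 < B by rewrite /B; have := Rabs_pos (g z); lra.
have e1 : 0 < Rmin 1 (eps / 3 / (A + 1)).
  apply: Rmin_pos; [lra| apply: Rdiv_lt_0_compat; lra].
have e2 : 0 < eps / 3 / B by apply: Rdiv_lt_0_compat; lra.
have e3 : 0 < eps / 3 by lra.
have [d1 [hd1 D1]] := Cg z _ e1.
have [d2 [hd2 D2]] := Cf z _ e2.
have [d3 [hd3 D3]] := IH2 z _ e3.
exists (Rmin d1 (Rmin d2 d3)); split.
  by apply: Rmin_pos => //; apply: Rmin_pos.
move=> z' hz.
have h1 : forall c, Rabs (z' c - z c) < d1 by move=> c; have := hz c; have := Rmin_l d1 (Rmin d2 d3); lra.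
have h2 : forall c, Rabs (z' c - z c) < d2.
  by move=> c; have := hz c; have := Rmin_r d1 (Rmin d2 d3); have := Rmin_l d2 d3; lra.
have h3 : forall c, Rabs (z' c - z c) < d3.
  by move=> c; have := hz c; have := Rmin_r d1 (Rmin d2 d3); have := Rmin_r d2 d3; lra.
have G := D1 _ h1; have F := D2 _ h2; have H := D3 _ h3.
have Gm1 := Rmin_l 1 (eps / 3 / (A + 1)); have Gm2 := Rmin_r 1 (eps / 3 / (A + 1)).
have E : f z' * g z' + h' z' - (f z * g z + h' z)
  = (f z' - f z) * g z' + f z * (g z' - g z) + (h' z' - h' z) by ring.
rewrite E.
have T1 : Rabs ((f z' - f z) * g z') <= eps / 3.
  rewrite Rabs_mult.
  have : Rabs (g z') <= B.
    have := Rabs_triang_inv (g z') (g z); rewrite /B; lra.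
  move=> hg.
  have : Rabs (f z' - f z) * Rabs (g z') <= eps / 3 / B * B.
    apply: Rmult_le_compat; try apply: Rabs_pos; lra.
  by rewrite /Rdiv Rmult_assoc Rinv_l ?Rmult_1_r; lra.
have T2 : Rabs (f z * (g z' - g z)) <= eps / 3.
  rewrite Rabs_mult.
  have : Rabs (f z) * Rabs (g z' - g z) <= (A + 1) * (eps / 3 / (A + 1)).
    have hAd : A = Rabs (f z) + 1 by [].
    apply: Rmult_le_compat; try apply: Rabs_pos; lra.
  have -> : (A + 1) * (eps / 3 / (A + 1)) = eps / 3 by field; lra.
  done.
have := Rabs_triang ((f z' - f z) * g z' + f z * (g z' - g z)) (h' z' - h' z).
have := Rabs_triang ((f z' - f z) * g z') (f z * (g z' - g z)).
lra.
Qed.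


Lemma SOP_pd K h c : SOP K h -> SOP K (pd c h).
Proof.
move=> HS; elim: HS => [|f g h' Hf Hg Hh IH].
  rewrite pd_cst; exact: SOP0.
have [Ef _] := smooth_all_iter Hf.2 [::].
have [Eg _] := smooth_all_iter Hg.2 [::].
have [Eh _] := SOP_smooth Hh.
rewrite /= in Ef Eg.
have -> : pd c (fun z => f z * g z + h' z)
   = fun z => pd c f z * g z + (f z * pd c g z + pd c h' z).
  apply: functional_extensionality => z; rewrite /pd.
  rewrite Derive_plus; last exact: Eh; last by apply: ex_derive_mult; [exact: Ef| exact: Eg].
  rewrite Derive_mult; [|exact: Ef| exact: Eg].
  rewrite upd_id; ring.
apply: SOPc; [exact: dfo_pd| exact: Hg|].
apply: SOPc; [exact: Hf| exact: dfo_pd|exact: IH].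
Qed.

Lemma SOP_iter K h cs : SOP K h -> SOP K (iter_pd cs h).
Proof. move=> H; elim: cs => [//|c cs IH] /=; exact: SOP_pd. Qed.

Lemma dep_iter K (h : dfun) (cs : seq coord) : dep_ord K h -> dep_ord K (iter_pd cs h).
Proof. move=> H; elim: cs => [//|c cs IH] /=; exact: dep_pd. Qed.

Lemma smooth_of K (h : dfun) : dep_ord K h -> (forall cs, smooth_all (iter_pd cs h)) -> smooth_ord K h.
Proof.
move=> Hd Hs cs; have [E C] := Hs cs; split; first by move=> z c; exact: E.
move=> z eps he; have [del [hd D]] := C z eps he; exists del; split => // z' h1 h2.
set z'' : jet := fun c => if (ordc c <= K)%N then z' c else z c.
have -> : iter_pd cs h z' = iter_pd cs h z''.
  apply: (dep_ordE (dep_iter cs Hd)) => c hc; by rewrite /z'' hc.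
apply: D => c; rewrite /z''; case: ifP => hc.
- case: c hc => [i _|[b k] hk]; [exact: h1| exact: h2].
- rewrite Rminus_diag Rabs_R0; lra.
Qed.

Lemma dfo_SOP K h : dep_ord K h -> SOP K h -> diff_fun_ord K h.
Proof.
move=> Hd HS; split => //.
exact: (smooth_of Hd (fun cs => SOP_smooth (SOP_iter cs HS))).
Qed.

Lemma iter_cst (cs : seq coord) a : exists b, iter_pd cs (cst a) = cst b.
Proof.
elim: cs => [|c cs [b IH]] /=; first by exists a.
rewrite IH pd_cst; by exists 0.
Qed.

Lemma smooth_cst a : smooth_all (cst a).
Proof.
split; first by move=> *; exact: ex_derive_const.
move=> z eps he; exists 1; split; [lra|] => z' _; rewrite /cst Rminus_diag Rabs_R0 //.
Qed.

Lemma dfo_cst K a : diff_fun_ord K (cst a).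
Proof.
split; first by move=> *.
apply: smooth_of; first by move=> *.
move=> cs; have [b ->] := iter_cst cs a; exact: smooth_cst.
Qed.

Lemma iter_crd (cs : seq coord) c0 : iter_pd cs (crd c0) = crd c0 \/ exists b, iter_pd cs (crd c0) = cst b.
Proof.
elim: cs => [|c cs IH] /=; first by left.
right; case: IH => [->|[b ->]]; [rewrite pd_crd| rewrite pd_cst]; by eexists.
Qed.

Lemma smooth_crd c0 : smooth_all (crd c0).
Proof.
split.
  move=> z c s; rewrite /crd /upd; case: eqP => _ /=.
  + exact: (ex_derive_id (K := R_AbsRing)).
  + exact: ex_derive_const.
move=> z eps he; exists eps; split => // z' h; exact: h.
Qed.

Lemma dfo_crd c0 : diff_fun_ord (ordc c0) (crd c0).
Proof.
have D : dep_ord (ordc c0) (crd c0).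
  move=> z z' H1 H2; rewrite /crd; case: c0 {H1 H2} (H1) (H2) => [i|[b k]] H1 H2; [exact: H1| exact: H2].
split => //; apply: (smooth_of D) => cs.
case: (iter_crd cs c0) => [->|[b ->]]; [exact: smooth_crd| exact: smooth_cst].
Qed.


Lemma dfo_mul K (f g : dfun) : diff_fun_ord K f -> diff_fun_ord K g ->
  diff_fun_ord K (fun z => f z * g z).
Proof.
move=> Hf Hg; apply: dfo_SOP.
  move=> z z' H1 H2; rewrite (Hf.1 z z' H1 H2) (Hg.1 z z' H1 H2) //.
have -> : (fun z => f z * g z) = fun z => f z * g z + cst 0 z.
  apply: functional_extensionality => z; rewrite /cst; ring.
apply: SOPc => //; exact: SOP0.
Qed.

Lemma dfo_add K (f g : dfun) : diff_fun_ord K f -> diff_fun_ord K g ->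
  diff_fun_ord K (fun z => f z + g z).
Proof.
move=> Hf Hg; apply: dfo_SOP.
  move=> z z' H1 H2; rewrite (Hf.1 z z' H1 H2) (Hg.1 z z' H1 H2) //.
have -> : (fun z => f z + g z) = fun z => f z * cst 1 z + (g z * cst 1 z + cst 0 z).
  apply: functional_extensionality => z; rewrite /cst; ring.
apply: SOPc => //; first exact: dfo_cst.
apply: SOPc => //; first exact: dfo_cst.
exact: SOP0.
Qed.

Lemma df_mono (f : dfun) : diff_fun f -> exists K0, forall K, (K0 <= K)%N -> diff_fun_ord K f.
Proof. move=> [K0 H]; exists K0 => K hK; exact: dfo_mono H. Qed.

Lemma df_mul (f g : dfun) : diff_fun f -> diff_fun g -> diff_fun (fun z => f z * g z).
Proof.
move=> [K1 H1] [K2 H2]; exists (maxn K1 K2); apply: dfo_mul.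
  apply: dfo_mono H1; exact: leq_maxl.
apply: dfo_mono H2; exact: leq_maxr.
Qed.

Lemma df_add (f g : dfun) : diff_fun f -> diff_fun g -> diff_fun (fun z => f z + g z).
Proof.
move=> [K1 H1] [K2 H2]; exists (maxn K1 K2); apply: dfo_add.
  apply: dfo_mono H1; exact: leq_maxl.
apply: dfo_mono H2; exact: leq_maxr.
Qed.

Lemma df_cst a : diff_fun (cst a).
Proof. exists 0%N; exact: dfo_cst. Qed.

Lemma df_crd c : diff_fun (crd c).
Proof. eexists; exact: dfo_crd. Qed.

Lemma df_pd c (f : dfun) : diff_fun f -> diff_fun (pd c f).
Proof. move=> [K H]; exists K; exact: dfo_pd. Qed.

Lemma df_ext (f g : dfun) : (forall z, f z = g z) -> diff_fun f -> diff_fun g.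
Proof. move=> E; have -> : f = g by apply: functional_extensionality. done. Qed.

Lemma df_sum (T : Type) (r : seq T) (F : T -> dfun) :
  (forall x, diff_fun (F x)) -> diff_fun (fun z => \rsum_(x <- r) F x z).
Proof.
move=> H; elim: r => [|a r IH].
  apply: (df_ext (f := cst 0)); [by move=> z; rewrite big_nil| exact: df_cst].
apply: (df_ext (f := fun z => F a z + \rsum_(x <- r) F x z)); [by move=> z; rewrite big_cons| exact: df_add].
Qed.

Lemma df_scal a (f : dfun) : diff_fun f -> diff_fun (fun z => a * f z).
Proof. move=> H; exact: (df_mul (df_cst a) H). Qed.

Lemma mi_le (k : mi n) i : (k i <= mabs k)%N.
Proof. rewrite /mabs (bigD1 i) //=; exact: leq_addr. Qed.

Definition mkc K (b : 'I_p) (g : {ffun 'I_n -> 'I_K.+1}) : coord :=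
  inr (b, [ffun i => nat_of_ord (g i)]).

Lemma clist_ex K : exists L : seq coord, uniq L /\ forall c, (ordc c <= K)%N -> c \in L.
Proof.
exists (undup ([seq inl i | i <- enum 'I_n] ++
   [seq mkc b g | b <- enum 'I_p, g <- enum {ffun 'I_n -> 'I_K.+1}])).
split; first exact: undup_uniq.
move=> c hc; rewrite mem_undup mem_cat; apply/orP.
case: c hc => [i _|[b k] hk]; first by left; apply: map_f; rewrite mem_enum.
right.
have -> : k = [ffun i => nat_of_ord ([ffun j => (inord (k j) : 'I_K.+1)] i)].
  apply/ffunP => i; rewrite !ffunE inordK //; rewrite ltnS; exact: leq_trans (mi_le k i) hk.
apply: (allpairs_f (@mkc K));
  by rewrite mem_enum.
Qed.

Lemma line_full K (f : dfun) (Hf : diff_fun_ord K f) (L : seq coord) :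
  uniq L -> (forall c, (ordc c <= K)%N -> c \in L) ->
  forall z d : jet,
  derivable_pt_lim (fun t => f (fun c => z c + t * d c)) 0 (\rsum_(c <- L) d c * pd c f z).
Proof.
move=> uL cov z d.
have -> : (fun t => f (fun c => z c + t * d c)) = fun t => f (lineL z d L t).
  apply: functional_extensionality => t; apply: (dep_ordE Hf.1) => c hc.
  by rewrite /lineL (cov c hc).
exact (line_deriv Hf.2 z d uL).
Qed.

Lemma line_ex (f : dfun) : diff_fun f -> forall z d : jet,
  ex_derive (fun t => f (fun c => z c + t * d c)) 0.
Proof.
move=> [K Hf] z d; have [L [uL cov]] := clist_ex K.
exists (\rsum_(c <- L) d c * pd c f z); apply/is_derive_Reals; exact (line_full Hf uL cov z d).
Qed.

Lemma line_at0 (f : dfun) (z d : jet) : f (fun c => z c + 0 * d c) = f z.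
Proof. f_equal; apply: functional_extensionality => c; ring. Qed.

Lemma Dt_formula K (f : dfun) (Hf : diff_fun_ord K f) (L : seq coord) :
  uniq L -> (forall c, (ordc c <= K)%N -> c \in L) ->
  forall i, Dt i f = fun z => \rsum_(c <- L) tvec i z c * pd c f z.
Proof.
move=> uL cov i; apply: functional_extensionality => z; rewrite /Dt.
apply: is_derive_unique; apply/is_derive_Reals; exact (line_full Hf uL cov z (tvec i z)).
Qed.


Lemma Dt_ex (f : dfun) i z : diff_fun f ->
  ex_derive (fun t => f (fun c => z c + t * tvec i z c)) 0.
Proof. move=> H; exact: line_ex. Qed.

Lemma Dt_mul (f g : dfun) i z : diff_fun f -> diff_fun g ->
  Dt i (fun z => f z * g z) z = Dt i f z * g z + f z * Dt i g z.
Proof.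
move=> Hf Hg; rewrite /Dt Derive_mult; [|exact: Dt_ex|exact: Dt_ex].
by rewrite !line_at0.
Qed.

Lemma Dt_add (f g : dfun) i z : diff_fun f -> diff_fun g ->
  Dt i (fun z => f z + g z) z = Dt i f z + Dt i g z.
Proof.
move=> Hf Hg; rewrite /Dt Derive_plus //; exact: Dt_ex.
Qed.

Lemma Dt_cst a i z : Dt i (cst a) z = 0.
Proof. exact: Derive_const. Qed.

Lemma Dt_scal a (f : dfun) i z : Dt i (fun z => a * f z) z = a * Dt i f z.
Proof. exact: Derive_scal. Qed.

Lemma Dt_crd c i z : Dt i (crd c) z = tvec i z c.
Proof.
rewrite /Dt /crd; apply: is_derive_unique.
have : is_derive (fun t => z c + t * tvec i z c) 0 (0 + 1 * tvec i z c).
  apply: (is_derive_plus (K := R_AbsRing) (V := R_NormedModule)); first exact: is_derive_const.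
  apply: is_derive_scal_l; exact: (is_derive_id (K := R_AbsRing)).
by rewrite Rplus_0_l Rmult_1_l.
Qed.

Lemma Dt_sum (T : Type) (r : seq T) (F : T -> dfun) i z :
  (forall x, diff_fun (F x)) ->
  Dt i (fun z => \rsum_(x <- r) F x z) z = \rsum_(x <- r) Dt i (F x) z.
Proof.
move=> H; elim: r => [|a r IH].
  rewrite big_nil; have -> : (fun z => \rsum_(x <- [::]) F x z) = cst 0.
    by apply: functional_extensionality => w; rewrite big_nil.
  exact: Dt_cst.
have -> : (fun z => \rsum_(x <- a :: r) F x z) = fun z => F a z + \rsum_(x <- r) F x z.
  by apply: functional_extensionality => w; rewrite big_cons.
rewrite Dt_add ?IH ?big_cons //; exact: df_sum.
Qed.

Definition tv i c : dfun := fun z => tvec i z c.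

Lemma tv_E i c : tv i c = match c with inl j => cst (if j == i then 1 else 0)
                                     | inr (b, k) => crd (inr (b, mi_add k i)) end.
Proof. by apply: functional_extensionality => z; case: c => [j|[b k]]. Qed.

Lemma df_tv i c : diff_fun (tv i c).
Proof. rewrite tv_E; case: c => [j|[b k]]; [exact: df_cst| exact: df_crd]. Qed.

Lemma df_Dt i (f : dfun) : diff_fun f -> diff_fun (Dt i f).
Proof.
move=> [K Hf]; have [L [uL cov]] := clist_ex K.
rewrite (Dt_formula Hf uL cov).
apply: df_sum => c; apply: df_mul; [exact: df_tv| apply: df_pd; by exists K].
Qed.

Lemma df_DI (s : seq 'I_n) (f : dfun) : diff_fun f -> diff_fun (DI s f).
Proof. move=> H; elim: s => [//|i s IH] /=; exact: df_Dt. Qed.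

Lemma updW_close (z : jet) c d u v del : 0 < del -> c != d ->
  Rabs (u - z c) < del -> Rabs (v - z d) < del ->
  forall c', Rabs (upd (upd z c u) d v c' - z c') < del.
Proof.
move=> hd cd hu hv c'; rewrite /upd.
case: eqP => [->|_] //; case: eqP => [->|_] //.
by rewrite Rminus_diag Rabs_R0.
Qed.

Lemma pd_comm K (f : dfun) c d z : diff_fun_ord K f -> pd c (pd d f) z = pd d (pd c f) z.
Proof.
move=> Hf.
case: (c =P d) => [->//|/eqP cd].
have dc : d != c by rewrite eq_sym.
have [Ecs _] := smooth_all_iter Hf.2 [::].
have [Ec Cc] := smooth_all_iter Hf.2 [:: c].
have [Ed Cd] := smooth_all_iter Hf.2 [:: d].
have [_ Ccd] := smooth_all_iter Hf.2 [:: c; d].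
have [_ Cdc] := smooth_all_iter Hf.2 [:: d; c].
rewrite /= in Ecs Ec Cc Ed Cd Ccd Cdc.
set phi := fun u v => f (upd (upd z c u) d v).
have H1 : forall u v, Derive (fun t => phi u t) v = pd d f (upd (upd z c u) d v).
  by move=> u v; rewrite pd_upd.
have H2 : forall u v, Derive (fun t => phi t v) u = pd c f (upd (upd z c u) d v).
  move=> u v; rewrite -upd_comm // pd_upd; apply: Derive_ext => t; rewrite /phi upd_comm //.
have H3 : forall u v, Derive (fun u' => Derive (fun t => phi u' t) v) u
                   = pd c (pd d f) (upd (upd z c u) d v).
  move=> u v; rewrite -upd_comm // pd_upd; apply: Derive_ext => t; rewrite H1 upd_comm //.
have H4 : forall u v, Derive (fun v' => Derive (fun t => phi t v') u) v
                   = pd d (pd c f) (upd (upd z c u) d v).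
  move=> u v; rewrite pd_upd; apply: Derive_ext => t; by rewrite H2.
have E1 : pd c (pd d f) z = Derive (fun u => Derive (fun t => phi u t) (z d)) (z c).
  by rewrite H3 !upd_id.
have E2 : pd d (pd c f) z = Derive (fun v => Derive (fun t => phi t v) (z c)) (z d).
  by rewrite H4 !upd_id.
rewrite E1 E2; apply: Schwarz.
- exists (mkposreal 1 Rlt_0_1) => u v _ _; split; [|split; [|split]].
  + have := Ecs (upd (upd z d v) c u) c u.
    apply: ex_derive_ext => t; rewrite /phi upd_upd upd_comm //.
  + exact: Ecs.
  + have := Ed (upd (upd z d v) c u) c u.
    apply: ex_derive_ext => t; rewrite H1 upd_upd upd_comm //.
  + have := Ec (upd (upd z c u) d v) d v.
    apply: ex_derive_ext => t; rewrite H2 upd_upd //.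
- move=> eps.
  have [del [hdel D]] := Ccd z eps (cond_pos eps).
  exists (mkposreal del hdel) => u v hu hv /=.
  rewrite !H3 !upd_id; apply: D; exact: updW_close.
- move=> eps.
  have [del [hdel D]] := Cdc z eps (cond_pos eps).
  exists (mkposreal del hdel) => u v hu hv /=.
  rewrite !H4 !upd_id; apply: D; exact: updW_close.
Qed.


Lemma mi_add_comm (k : mi n) i j : mi_add (mi_add k i) j = mi_add (mi_add k j) i.
Proof. apply/ffunP => x; rewrite !ffunE; by rewrite -!addnA (addnC (x == j)). Qed.

Lemma Dt_tv i c i' z : Dt i' (tv i c) z =
  match c with inl _ => 0 | inr (b, k) => z (inr (b, mi_add (mi_add k i) i')) end.
Proof. rewrite tv_E; case: c => [j|[b k]]; [exact: Dt_cst| by rewrite Dt_crd]. Qed.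

Lemma Dt_comm (f : dfun) i j z : diff_fun f -> Dt i (Dt j f) z = Dt j (Dt i f) z.
Proof.
move=> [K Hf]; have [L [uL cov]] := clist_ex K.
have G : forall i0 j0, Dt i0 (Dt j0 f) z =
   \rsum_(d <- L) Dt i0 (tv j0 d) z * pd d f z +
   \rsum_(d <- L) \rsum_(c <- L) tvec j0 z d * tvec i0 z c * pd c (pd d f) z.
  move=> i0 j0; rewrite (Dt_formula Hf uL cov j0).
  rewrite (@Dt_sum _ L (fun c w => tv j0 c w * pd c f w)); last first.
    move=> c; apply: df_mul; [exact: df_tv| apply: df_pd; by exists K].
  rewrite -big_split /=; apply: eq_bigr => d _.
  rewrite Dt_mul; [|exact: df_tv| apply: df_pd; by exists K].
  rewrite (Dt_formula (dfo_pd d Hf) uL cov i0) big_distrr /=; congr (_ + _).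
  apply: eq_bigr => c _; rewrite /tv; ring.
rewrite !G; congr (_ + _).
  apply: eq_bigr => d _; rewrite !Dt_tv; case: d => [//|[b k]]; by rewrite mi_add_comm.
rewrite exchange_big /=; apply: eq_bigr => d _; apply: eq_bigr => c _.
rewrite (pd_comm c d z Hf); ring.
Qed.


Lemma DI_cat (s1 s2 : seq 'I_n) (f : dfun) : DI (s1 ++ s2) f = DI s1 (DI s2 f).
Proof. by rewrite /DI foldr_cat. Qed.

Lemma DI_rem (s : seq 'I_n) i (f : dfun) : diff_fun f -> i \in s ->
  DI s f = Dt i (DI (rem i s) f).
Proof.
move=> Hf; elim: s => [//|j t IH] /=.
rewrite in_cons; case: (j =P i) => [e|/eqP ne] /= hi.
  by subst j.
have hi' : i \in t by case/orP: hi => // /eqP e; rewrite e eqxx in ne.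
rewrite (IH hi'); apply: functional_extensionality => z.
apply: Dt_comm; apply: df_DI; exact: Hf.
Qed.

Lemma DI_perm (s s' : seq 'I_n) (f : dfun) : diff_fun f -> perm_eq s s' -> DI s f = DI s' f.
Proof.
move=> Hf; elim: s s' => [|i s IH] s' hp.
  by move: (perm_size hp); case: s' hp.
have hi : i \in s' by rewrite -(perm_mem hp) mem_head.
rewrite (DI_rem Hf hi) /=; congr (Dt i); apply: IH.
by rewrite -(perm_cons i) (perm_trans hp) // perm_to_rem.
Qed.

Lemma count_mi_seq (k : mi n) j : count_mem j (mi_seq k) = k j.
Proof.
rewrite /mi_seq count_flatten -map_comp sumnE big_map big_enum /=.
rewrite (bigD1 j) //= count_nseq /= eqxx mul1n big1 ?addn0 // => i /negbTE ne.
by rewrite count_nseq /= ?ne ?(eq_sym j i) ?ne mul0n.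
Qed.

Lemma perm_countE (s1 s2 : seq 'I_n) : (forall j, count_mem j s1 = count_mem j s2) -> perm_eq s1 s2.
Proof. move=> H; rewrite /perm_eq; apply/allP => x _ /=; by rewrite H. Qed.

Lemma mi_seq_add (k : mi n) i : perm_eq (i :: mi_seq k) (mi_seq (mi_add k i)).
Proof.
apply: perm_countE => j /=; rewrite !count_mi_seq /mi_add ffunE addnC; by rewrite eq_sym.
Qed.

Lemma mi_seq0 : mi_seq (mi0 n) = [::].
Proof.
apply/eqP; rewrite -size_eq0 -count_predT.
have : perm_eq (mi_seq (mi0 n)) [::].
  apply: perm_countE => j; by rewrite count_mi_seq /mi0 ffunE.
by move/perm_size => /=; rewrite count_predT => ->.
Qed.

Lemma DK_add (k : mi n) i (f : dfun) : diff_fun f -> DK (mi_add k i) f = Dt i (DK k f).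
Proof. move=> Hf; rewrite /DK -(DI_perm Hf (mi_seq_add k i)) //. Qed.

Lemma DK0 (f : dfun) : DK (mi0 n) f = f.
Proof. by rewrite /DK mi_seq0. Qed.

Lemma mi_cnt_perm (s1 s2 : seq 'I_n) : perm_eq s1 s2 -> mi_cnt s1 = mi_cnt s2.
Proof. move=> /permP H; apply/ffunP => j; by rewrite !ffunE H. Qed.

Lemma mnom_perm (s1 s2 : seq 'I_n) : perm_eq s1 s2 -> mnom s1 = mnom s2.
Proof.
move=> hp; rewrite /mnom (perm_size hp); move/permP: hp => H.
congr (_ %/ _)%N; apply: eq_bigr => i _; by rewrite H.
Qed.

End Calc.

Lemma Rsum_opp (I : Type) (r : seq I) (F : I -> R) :
  \rsum_(x <- r) - F x = - \rsum_(x <- r) F x.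
Proof. elim: r => [|a r IH]; rewrite ?big_nil ?big_cons ?IH; ring. Qed.

Lemma sum_tuple0 n (G : seq 'I_n -> R) : \rsum_(K : 0.-tuple 'I_n) G K = G [::].
Proof. rewrite (big_pred1 [tuple]) // => t /=; rewrite [t]tuple0; exact: (esym (eqxx _)). Qed.

Lemma sum_cons_tuple n j (G : seq 'I_n -> R) :
  \rsum_(J : j.-tuple 'I_n) \rsum_(i < n) G (i :: J) = \rsum_(J : j.+1.-tuple 'I_n) G J.
Proof.
rewrite exchange_big pair_big /=.
rewrite (reindex (fun p : 'I_n * j.-tuple 'I_n => [tuple of p.1 :: p.2])) /=; first by [].
exists (fun t : j.+1.-tuple 'I_n => (thead t, [tuple of behead t])).
  by move=> [i J] _ /=; congr (_, _); apply: val_inj.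
move=> t _; apply: val_inj => /=; by case: t => [[|a s] //].
Qed.

Lemma telescope (g : nat -> R) k : \rsum_(j < k.+1) (g j.+1 - g j) = g k.+1 - g 0%N.
Proof.
elim: k => [|k IH]; first by rewrite big_ord_recr big_ord0 /=; ring.
rewrite big_ord_recr IH /=; ring.
Qed.

Section Tel.
Variables (n p m M : nat) (emb : 'I_m -> 'I_p) (N : nat).
Variables (w : 'I_m -> dfun n p) (v : 'I_M -> dfun n p) (F : 'I_M -> dfun n p).
Hypotheses (Hw : forall al, diff_fun (w al)) (Hv : forall a, diff_fun (v a))
  (HF : forall a, diff_fun (F a)).

Definition fal al (s : seq 'I_n) : dfun n p :=
  fun z => \rsum_(a < M) (v a z * pdU emb al s (F a) z).

Lemma df_pdU al s (f : dfun n p) : diff_fun f -> diff_fun (pdU emb al s f).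
Proof.
move=> H; apply: (df_ext (f := fun z => / INR (mnom s) * pd (inr (emb al, mi_cnt s)) f z)).
  by move=> z; rewrite /pdU /Rdiv Rmult_comm.
apply: df_scal; exact: df_pd.
Qed.

Lemma df_fal al s : diff_fun (fal al s).
Proof. apply: df_sum => a; apply: df_mul => //; exact: df_pdU. Qed.

Lemma pdU_perm al (s s' : seq 'I_n) (f : dfun n p) : perm_eq s s' -> pdU emb al s f = pdU emb al s' f.
Proof. move=> hp; by rewrite /pdU (mi_cnt_perm hp) (mnom_perm hp). Qed.

Lemma fal_perm al (s s' : seq 'I_n) : perm_eq s s' -> fal al s = fal al s'.
Proof.
move=> hp; apply: functional_extensionality => z; apply: eq_bigr => a _.
by rewrite (pdU_perm _ _ hp).
Qed.

Variable z : jet n p.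

Definition Tb al k j (J K : seq 'I_n) :=
  (-1) ^ (k - j) * (DI J (w al) z * DI K (fal al (J ++ K)) z).
Definition T al k j :=
  \rsum_(J : j.-tuple 'I_n) \rsum_(K : (k - j).-tuple 'I_n) Tb al k j J K.

Definition inner al k i : dfun n p := fun z' =>
  \rsum_(j < k.+1) \rsum_(J : j.-tuple 'I_n) \rsum_(K : (k - j).-tuple 'I_n)
     ((-1) ^ (k - j) * (DI J (w al) z' * DI K (fal al (J ++ K ++ [:: i])) z')).

Lemma df_term al k j (J K s : seq 'I_n) :
  diff_fun (fun z' => (-1) ^ (k - j) * (DI J (w al) z' * DI K (fal al s) z')).
Proof. apply: df_scal; apply: df_mul; apply: df_DI => //; exact: df_fal. Qed.

Lemma Dt_inner al k i : Dt i (inner al k i) z =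
  \rsum_(j < k.+1) \rsum_(J : j.-tuple 'I_n) \rsum_(K : (k - j).-tuple 'I_n)
     ((-1) ^ (k - j) * (DI (i :: J) (w al) z * DI K (fal al (J ++ K ++ [:: i])) z
                       + DI J (w al) z * DI (i :: K) (fal al (J ++ K ++ [:: i])) z)).
Proof.
rewrite /inner Dt_sum; last by move=> j; do 2 (apply: df_sum => ?); exact: df_term.
apply: eq_bigr => j _; rewrite Dt_sum; last by move=> J; apply: df_sum => ?; exact: df_term.
apply: eq_bigr => J _; rewrite Dt_sum; last by move=> K; exact: df_term.
apply: eq_bigr => K _; rewrite Dt_scal Dt_mul //; apply: df_DI => //; exact: df_fal.
Qed.

Lemma inner_D al k : \rsum_(i < n) Dt i (inner al k i) z = T al k.+1 k.+1 - T al k.+1 0.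
Proof.
rewrite -(telescope (fun j => T al k.+1 j) k).
under eq_bigr => i _ do rewrite Dt_inner.
rewrite exchange_big /=; apply: eq_bigr => j _.
under eq_bigr => i _ do under eq_bigr => J _ do under eq_bigr => K _ do rewrite Rmult_plus_distr_l.
under eq_bigr => i _ do under eq_bigr => J _ do rewrite big_split /=.
under eq_bigr => i _ do rewrite big_split /=.
rewrite big_split /= /Rminus; congr (_ + _).
-
  rewrite /T exchange_big /=.
  transitivity (\rsum_(J : j.-tuple 'I_n) \rsum_(i < n)
     (fun J' : seq 'I_n => \rsum_(K : (k - j).-tuple 'I_n) Tb al k.+1 j.+1 J' K) (i :: J));
    last exact (@sum_cons_tuple _ j (fun J' : seq 'I_n => \rsum_(K : (k - j).-tuple 'I_n) Tb al k.+1 j.+1 J' K)).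
  apply: eq_bigr => J _; apply: eq_bigr => i _ /=.
  apply: eq_bigr => K _; rewrite /Tb /=.
  rewrite (fal_perm al (s' := (i :: J) ++ K)) //.
  by rewrite catA cats1 perm_rcons /= perm_refl.
-
  have hj : (j <= k)%N by rewrite -ltnS.
  rewrite /T (subSn hj) -Rsum_opp /= exchange_big /=; apply: eq_bigr => J _.
  rewrite -Rsum_opp /= exchange_big /=.
  transitivity (\rsum_(K : (k - j).-tuple 'I_n) \rsum_(i < n)
     (fun K' : seq 'I_n => - Tb al k.+1 j J K') (i :: K));
    last exact (@sum_cons_tuple _ (k - j) (fun K' : seq 'I_n => - Tb al k.+1 j J K')).
  apply: eq_bigr => K _; apply: eq_bigr => i _.
  rewrite (fal_perm al (s' := J ++ (i :: K))); last first.
    by rewrite perm_cat2l cats1 perm_rcons perm_refl.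
  rewrite /Tb (subSn hj) /=; ring.
Qed.

Lemma Psi_E i : Psi emb N w v F i = fun z' => \rsum_(k < N) \rsum_(al < m) inner al k i z'.
Proof.
apply: functional_extensionality => z'; rewrite /Psi /inner; apply: eq_bigr => k _.
rewrite [RHS]exchange_big /=; apply: eq_bigr => j _.
rewrite [RHS]exchange_big /=; apply: eq_bigr => J _.
rewrite [RHS]exchange_big /=; apply: eq_bigr => K _.
apply: eq_bigr => al _; by rewrite /fal Rmult_assoc.
Qed.

Lemma df_inner al k i : diff_fun (inner al k i).
Proof. do 3 (apply: df_sum => ?); exact: df_term. Qed.

Lemma T_kk al k : T al k k = \rsum_(I : k.-tuple 'I_n) (DI I (w al) z * fal al I z).
Proof.
rewrite /T; apply: eq_bigr => J _; rewrite subnn.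
rewrite (sum_tuple0 (fun K => Tb al k k J K)) /Tb subnn cats0 /=; ring.
Qed.

Lemma T_k0 al k : T al k 0 = w al z * \rsum_(I : k.-tuple 'I_n) ((-1) ^ k * DI I (fal al I) z).
Proof.
rewrite /T subn0 (sum_tuple0 (fun J => \rsum_(K : k.-tuple 'I_n) Tb al k 0 J K)) big_distrr /=.
apply: eq_bigr => K _; rewrite /Tb subn0 /=; ring.
Qed.

Lemma TEL :
  \rsum_(al < m) \rsum_(k < N.+1) \rsum_(I : k.-tuple 'I_n) (DI I (w al) z * fal al I z)
  - \rsum_(al < m) (w al z * \rsum_(k < N.+1) \rsum_(I : k.-tuple 'I_n) ((-1) ^ k * DI I (fal al I) z))
  = \rsum_(i < n) Dt i (Psi emb N w v F i) z.
Proof.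
have E : forall i, Dt i (Psi emb N w v F i) z = \rsum_(k < N) \rsum_(al < m) Dt i (inner al k i) z.
  move=> i; rewrite Psi_E Dt_sum; last by move=> k; apply: df_sum => al; exact: df_inner.
  apply: eq_bigr => k _; rewrite Dt_sum; last by move=> al; exact: df_inner.
  by [].
under [RHS]eq_bigr => i _ do rewrite E.
rewrite [RHS]exchange_big /=.
under [RHS]eq_bigr => k _ do rewrite exchange_big /=.
under [RHS]eq_bigr => k _ do under eq_bigr => al _ do rewrite inner_D.
rewrite [RHS]exchange_big /= /Rminus -Rsum_opp -big_split /=; apply: eq_bigr => al _.
under eq_bigr => k _ do rewrite -T_kk.
rewrite big_distrr /=.
under [X in _ + - X = _]eq_bigr => k _ do rewrite -T_k0.
rewrite -Rsum_opp -big_split /= big_ord_recl /=.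
rewrite (_ : T al 0 0 + - T al 0 0 = 0); last ring.
rewrite Rplus_0_l; by apply: eq_bigr => k _; rewrite /bump /=.
Qed.

End Tel.

Lemma split_l m M (al : 'I_m) : split (lshift M al) = inl al.
Proof. by rewrite -/(unsplit (inl al)) unsplitK. Qed.
Lemma split_r m M (a : 'I_M) : split (rshift m a) = inr a.
Proof. by rewrite -/(unsplit (inr a)) unsplitK. Qed.

Section Gen.
Variables n p : nat.
Lemma df_sum_in (T : Type) (r : seq T) (F : T -> dfun n p) :
  (forall x, In x r -> diff_fun (F x)) -> diff_fun (fun z => \rsum_(x <- r) F x z).
Proof.
elim: r => [|a r IH] H.
  apply: (df_ext (f := cst 0)); [by move=> z; rewrite big_nil| exact: df_cst].
apply: (df_ext (f := fun z => F a z + \rsum_(x <- r) F x z)); [by move=> z; rewrite big_cons|].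
apply: df_add; [apply: H; left => // | apply: IH => x hx; apply: H; by right].
Qed.

Lemma Dt_sum_in (T : Type) (r : seq T) (F : T -> dfun n p) i z :
  (forall x, In x r -> diff_fun (F x)) ->
  Dt i (fun z => \rsum_(x <- r) F x z) z = \rsum_(x <- r) Dt i (F x) z.
Proof.
elim: r => [|a r IH] H.
  rewrite big_nil; have -> : (fun z => \rsum_(x <- [::]) F x z) = cst 0.
    by apply: functional_extensionality => w; rewrite big_nil.
  exact: Dt_cst.
have -> : (fun z => \rsum_(x <- a :: r) F x z) = fun z => F a z + \rsum_(x <- r) F x z.
  by apply: functional_extensionality => w; rewrite big_cons.
have Ha : diff_fun (F a) by apply: H; left.
have Hr : forall x, In x r -> diff_fun (F x) by move=> x hx; apply: H; right.
rewrite Dt_add // ?IH ?big_cons //; exact: df_sum_in.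
Qed.
End Gen.

Section Lift.
Variables n m M : nat.

Definition cmap (c : coord n (m + M)) : option (coord n m) :=
  match c with
  | inl i => Some (inl i)
  | inr (b, k) => match split b with inl al => Some (inr (al, k)) | inr _ => None end
  end.

Lemma proj_upd (z : jet n (m + M)) c t :
  proj_u (upd z c t) = match cmap c with Some c' => upd (proj_u z) c' t | None => proj_u z end.
Proof.
apply: functional_extensionality => c'.
case: c => [i|[b k]] /=.
  by case: c' => [j|[al k']] //=; rewrite /upd /=.
case: splitP => [al e|a e].
  have eb : b = lshift M al by apply: val_inj.
  subst b.
  case: c' => [j|[al' k']] //=; rewrite /upd /=.
have eb : b = rshift m a by apply: val_inj.
subst b.
case: c' => [j|[al' k']] //=; rewrite /upd /=.
rewrite (_ : (inr (lshift M al', k') == inr (rshift m a, k) :> coord n (m + M)) = false) //.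
apply/negbTE/eqP => -[h _].
move: (ltn_ord al'); by rewrite h ltnNge leq_addr.
Qed.

Lemma cmap_val (z : jet n (m + M)) c c' : cmap c = Some c' -> z c = proj_u z c'.
Proof.
case: c => [i|[b k]] /=; first by case=> <-.
case: splitP => [al e|a e] //; case=> <- /=.
have eb : b = lshift M al by apply: val_inj.
by subst b.
Qed.

Lemma pd_liftU c (g : dfun n m) :
  pd c (liftU (M := M) g) = match cmap c with Some c' => liftU (pd c' g) | None => cst 0 end.
Proof.
apply: functional_extensionality => z; rewrite /pd /liftU.
case E: (cmap c) => [c'|].
  rewrite (cmap_val z E); f_equal; apply: functional_extensionality => t.
  by rewrite proj_upd E.
rewrite /cst; under Derive_ext => t do rewrite proj_upd E.
exact: Derive_const.
Qed.

Lemma iter_liftU (cs : seq (coord n (m + M))) (g : dfun n m) :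
  (exists cs', iter_pd cs (liftU (M := M) g) = liftU (iter_pd cs' g)) \/
  exists b, iter_pd cs (liftU (M := M) g) = cst b.
Proof.
elim: cs => [|c cs [[cs' IH]|[b IH]]] /=; first by left; exists [::].
  rewrite IH pd_liftU; case: (cmap c) => [c'|].
    by left; exists (c' :: cs').
  by right; exists 0.
right; rewrite IH pd_cst; by exists 0.
Qed.

Lemma smooth_liftU (h : dfun n m) : smooth_all h -> smooth_all (liftU (M := M) h).
Proof.
move=> [E C]; split.
  move=> z c s; rewrite /liftU.
  case Ec: (cmap c) => [c'|].
    have := E (proj_u z) c' s; apply: ex_derive_ext => t; by rewrite proj_upd Ec.
  apply: (ex_derive_ext (fun _ => h (proj_u z))); last exact: ex_derive_const.
  by move=> t; rewrite proj_upd Ec.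
move=> z eps he; have [del [hd D]] := C (proj_u z) eps he; exists del; split => // z' hz.
apply: D => c'; case: c' => [i|[al k]] /=; [exact: hz| exact: hz].
Qed.

Lemma dfo_liftU K (f : dfun n m) : diff_fun_ord K f -> diff_fun_ord K (liftU (M := M) f).
Proof.
move=> [Hd Hs].
have D : dep_ord K (liftU (M := M) f).
  move=> z z' H1 H2; rewrite /liftU; apply: Hd => [i|al k hk] /=; [exact: H1| exact: H2].
split => //; apply: (smooth_of D) => cs.
case: (iter_liftU cs f) => [[cs' ->]|[b ->]]; last exact: smooth_cst.
apply: smooth_liftU; exact: smooth_all_iter.
Qed.

Lemma df_liftU (f : dfun n m) : diff_fun f -> diff_fun (liftU (M := M) f).
Proof. move=> [K H]; exists K; exact: dfo_liftU. Qed.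

Lemma Dt_liftU i (g : dfun n m) : Dt i (liftU (M := M) g) = liftU (Dt i g).
Proof.
apply: functional_extensionality => w; rewrite /Dt /liftU; f_equal.
apply: functional_extensionality => t; f_equal.
by apply: functional_extensionality => -[j|[al k]].
Qed.

Lemma DI_liftU (s : seq 'I_n) (g : dfun n m) : DI s (liftU (M := M) g) = liftU (DI s g).
Proof. elim: s => [//|i s IH] /=; by rewrite IH Dt_liftU. Qed.

Lemma pdU_liftU al (s : seq 'I_n) (g : dfun n m) :
  pdU (lshift M) al s (liftU (M := M) g) = liftU (pdU (fun b => b) al s g).
Proof.
apply: functional_extensionality => w; rewrite /pdU pd_liftU /= split_l //.
Qed.

Lemma vcoord_upd a c (z : jet n (m + M)) t : cmap c <> None -> vcoord a (upd z c t) = vcoord a z.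
Proof.
rewrite /vcoord /upd; case: c => [i|[b k]] //= h.
case: eqP => // [[e1 e2]]; subst b; by rewrite split_r in h.
Qed.

End Lift.

Section Subst.
Variables (n m M : nat) (Q : 'I_M -> dfun n m).
Hypothesis HQ : forall a, diff_fun (Q a).

Definition term := ('I_M * mi n * dfun n m)%type.
Definition Hterm (ts : seq term) : dfun n (m + M) :=
  fun w => \rsum_(t <- ts) (crd (inr (rshift m t.1.1, t.1.2)) w * liftU (M := M) t.2 w).
Definition HQt (ts : seq term) : dfun n m :=
  fun z => \rsum_(t <- ts) (DK t.1.2 (Q t.1.1) z * t.2 z).
Fixpoint Dts i (ts : seq term) : seq term :=
  match ts with
  | [::] => [::]
  | t :: ts' => (t.1.1, mi_add t.1.2 i, t.2) :: (t.1, Dt i t.2) :: Dts i ts'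
  end.
Definition good (ts : seq term) := forall t, In t ts -> diff_fun t.2.

Lemma good_cons t ts : good (t :: ts) -> diff_fun t.2 /\ good ts.
Proof. move=> H; split; [apply: H; by left| move=> x hx; apply: H; by right]. Qed.

Lemma good_Dts i ts : good ts -> good (Dts i ts).
Proof.
elim: ts => [//|t ts IH] /good_cons [H1 H2] /= x [<-|[<-|hx]] //=.
- exact: df_Dt.
- exact: IH.
Qed.

Lemma Dt_Hterm i ts : good ts -> Dt i (Hterm ts) = Hterm (Dts i ts).
Proof.
move=> G; apply: functional_extensionality => w; rewrite /Hterm Dt_sum_in; last first.
  move=> t ht; apply: df_mul; [exact: df_crd| apply: df_liftU; exact: G].
elim: ts G => [|t ts IH] G; first by rewrite !big_nil.
have [H1 H2] := good_cons G.
rewrite /= !big_cons IH // Dt_mul; [|exact: df_crd| exact: df_liftU].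
rewrite Dt_crd Dt_liftU /= /crd; ring.
Qed.

Lemma Dt_HQt i ts : good ts -> Dt i (HQt ts) = HQt (Dts i ts).
Proof.
move=> G; apply: functional_extensionality => z; rewrite /HQt Dt_sum_in; last first.
  move=> t ht; apply: df_mul; [apply: df_DI; exact: HQ| exact: G].
elim: ts G => [|t ts IH] G; first by rewrite !big_nil.
have [H1 H2] := good_cons G.
rewrite /= !big_cons IH // Dt_mul //; last by apply: df_DI.
rewrite /= -DK_add //; ring.
Qed.

Lemma DI_Hterm (s : seq 'I_n) ts : good ts ->
  [/\ good (foldr Dts ts s), DI s (Hterm ts) = Hterm (foldr Dts ts s)
    & DI s (HQt ts) = HQt (foldr Dts ts s)].
Proof.
move=> G; elim: s => [//|i s [IH1 IH2 IH3]] /=.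
split; [exact: good_Dts| by rewrite IH2 Dt_Hterm| by rewrite IH3 Dt_HQt].
Qed.

Lemma proj_substQ (z : jet n m) : proj_u (substQ Q z) = z.
Proof. by apply: functional_extensionality => -[i|[al k]] //=; rewrite split_l. Qed.

Lemma Hterm_subst ts z : Hterm ts (substQ Q z) = HQt ts z.
Proof.
rewrite /Hterm /HQt; apply: eq_bigr => t _.
by rewrite /crd /liftU proj_substQ /= split_r.
Qed.

Lemma subst_main (G : 'I_M -> dfun n m) : (forall a, diff_fun (G a)) ->
  forall (s : seq 'I_n) z,
  DI s (fun w => \rsum_(a < M) (vcoord a w * liftU (M := M) (G a) w)) (substQ Q z)
  = DI s (fun z => \rsum_(a < M) (Q a z * G a z)) z.
Proof.
move=> HG s z.
set ts0 := [seq (a, mi0 n, G a) | a <- index_enum 'I_M].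
have g0 : good ts0.
  rewrite /ts0 /good; elim: (index_enum 'I_M) => [|a l IH] x /=; [done| move=> [<-|hx]; [exact: HG| exact: IH]].
have E1 : (fun w => \rsum_(a < M) (vcoord a w * liftU (M := M) (G a) w)) = Hterm ts0.
  by apply: functional_extensionality => w; rewrite /Hterm big_map.
have E2 : (fun z => \rsum_(a < M) (Q a z * G a z)) = HQt ts0.
  apply: functional_extensionality => w; rewrite /HQt big_map; apply: eq_bigr => a _.
  by rewrite /= DK0.
have [_ D1 D2] := DI_Hterm s g0.
by rewrite E1 E2 D1 D2 Hterm_subst.
Qed.

End Subst.

Lemma conj3 (n m M N : nat)
    (F : 'I_M -> dfun n m) (P : 'I_m -> dfun n m) (Q : 'I_M -> dfun n m)
    (HF : forall a : 'I_M, diff_fun (F a))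
    (HP : forall al : 'I_m, diff_fun (P al))
    (HQ : forall a : 'I_M, diff_fun (Q a)) (z : jet n m) :
      \rsum_(a < M) (Q a z * frech (fun b : 'I_m => b) N P F a z)
      - \rsum_(al < m) (P al z * adj (fun b : 'I_m => b) N Q F al z)
      = \rsum_(i < n) Dt i (Psi (fun b : 'I_m => b) N P Q F i) z.
Proof.
rewrite -(TEL (fun b : 'I_m => b) N HP HQ HF z); congr (_ - _).
rewrite /frech /frech1 /fal.
under eq_bigr => a _ do rewrite big_distrr /=.
rewrite exchange_big /=; apply: eq_bigr => al _.
under eq_bigr => a _ do rewrite big_distrr /=.
rewrite exchange_big /=; apply: eq_bigr => k _.
under eq_bigr => a _ do rewrite big_distrr /=.
rewrite exchange_big /=; apply: eq_bigr => I _.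
rewrite big_distrr /=; apply: eq_bigr => a _; ring.
Qed.

Lemma Derive_rsum (T : Type) (r : seq T) (G : T -> R -> R) t :
  (forall x, ex_derive (G x) t) ->
  Derive (fun t => \rsum_(x <- r) G x t) t = \rsum_(x <- r) Derive (G x) t.
Proof.
move=> H; elim: r => [|a r IH].
  rewrite big_nil; under Derive_ext => s do rewrite big_nil; exact: Derive_const.
have Ex : forall r', ex_derive (fun t => \rsum_(x <- r') G x t) t.
  elim=> [|b r' IH'].
    apply: (ex_derive_ext (fun _ => 0)); [by move=> s; rewrite big_nil| exact: ex_derive_const].
  apply: (ex_derive_ext (fun s => G b s + \rsum_(x <- r') G x s)); first by move=> s; rewrite big_cons.
  exact: (ex_derive_plus (K := R_AbsRing) (V := R_NormedModule)).
under Derive_ext => s do rewrite big_cons.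
rewrite Derive_plus ?IH ?big_cons //; exact: Ex.
Qed.

Lemma conj1 (n m M N : nat)
    (F : 'I_M -> dfun n m) (P : 'I_m -> dfun n m)
    (HF : forall a : 'I_M, diff_fun (F a))
    (HP : forall al : 'I_m, diff_fun (P al)) (z : jet n (m + M)) :
      frech1 (lshift M) N (fun al => liftU (M:=M) (P al)) (Lag F) z
      = \rsum_(al < m) (liftU (M:=M) (P al) z * euler (lshift M) N (Lag F) al z)
        + \rsum_(i < n) Dt i (Phi N P F i) z.
Proof.
have Hw : forall al, diff_fun (liftU (M := M) (P al)) by move=> al; exact: df_liftU.
have Hv : forall a : 'I_M, diff_fun (@vcoord n m M a) by move=> a; exact: (df_crd (inr (rshift m a, mi0 n))).
have HF' : forall a, diff_fun (liftU (M := M) (F a)) by move=> a; exact: df_liftU.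
have key : forall al s, pdU (lshift M) al s (Lag F) = fal (lshift M) (@vcoord n m M) (fun a => liftU (M := M) (F a)) al s.
  move=> al s; apply: functional_extensionality => w; rewrite /pdU /fal /Lag /pd.
  set c := inr (lshift M al, mi_cnt s).
  have hc : cmap c <> None by rewrite /c /= split_l.
  under Derive_ext => t do under eq_bigr => a _ do rewrite (vcoord_upd _ _ _ hc).
  rewrite Derive_rsum; last first.
    move=> a; apply: ex_derive_scal; have [K HK] := HF' a.
    exact: (exd_any HK.2 [::] w c (w c)).
  rewrite /Rdiv big_distrl /=; apply: eq_bigr => a _; rewrite Derive_scal /pdU /pd -/c /Rdiv; ring.
rewrite /Phi -(TEL (lshift M) N Hw Hv HF' z) /frech1 /euler.
under eq_bigr => al _ do under eq_bigr => k _ do under eq_bigr => I _ do rewrite key.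
under [X in _ = X + _]eq_bigr => al _ do under eq_bigr => k _ do under eq_bigr => I _ do rewrite key.
have H : forall x y : R, x = y + (x - y) by move=> *; ring.
exact: H.
Qed.

Lemma conj2 (n m M N : nat)
    (F : 'I_M -> dfun n m) (P : 'I_m -> dfun n m) (Q : 'I_M -> dfun n m)
    (HF : forall a : 'I_M, diff_fun (F a))
    (HQ : forall a : 'I_M, diff_fun (Q a)) (i : 'I_n) (z : jet n m) :
      Phi N P F i (substQ Q z) = Psi (fun b : 'I_m => b) N P Q F i z.
Proof.
rewrite /Phi /Psi; apply: eq_bigr => k _; apply: eq_bigr => j _.
apply: eq_bigr => J _; apply: eq_bigr => K _; apply: eq_bigr => al _.
rewrite DI_liftU /liftU proj_substQ.
set s := (_ ++ _ ++ _).
have -> : (fun z' => \rsum_(a < M) (@vcoord n m M a z' * pdU (lshift M) al s (liftU (M := M) (F a)) z'))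
  = (fun w => \rsum_(a < M) (@vcoord n m M a w * liftU (M := M) (pdU (fun b : 'I_m => b) al s (F a)) w)).
  apply: functional_extensionality => w; apply: eq_bigr => a _; by rewrite pdU_liftU.
rewrite (subst_main HQ (G := fun a => pdU (fun b : 'I_m => b) al s (F a))) //.
move=> a; exact: df_pdU.
Qed.

End Aux.
Import Aux.

Theorem theorem2 (n m M N : nat)
    (F : 'I_M -> dfun n m) (P : 'I_m -> dfun n m) (Q : 'I_M -> dfun n m)
    (HF : forall a : 'I_M, diff_fun_ord N (F a))
    (HP : forall al : 'I_m, diff_fun (P al))
    (HQ : forall a : 'I_M, diff_fun (Q a))
    (Hadj : forall al : 'I_m, onE F (adj (fun b : 'I_m => b) N Q F al))
    (Hsym : forall a : 'I_M, onE F (frech (fun b : 'I_m => b) N P F a)) :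
  (forall z : jet n (m + M),
      frech1 (lshift M) N (fun al => liftU (M:=M) (P al)) (Lag F) z
      = \rsum_(al < m) (liftU (M:=M) (P al) z * euler (lshift M) N (Lag F) al z)
        + \rsum_(i < n) Dt i (Phi N P F i) z) /\
  (forall (i : 'I_n) (z : jet n m),
      Phi N P F i (substQ Q z) = Psi (fun b : 'I_m => b) N P Q F i z) /\
  (forall z : jet n m,
      \rsum_(a < M) (Q a z * frech (fun b : 'I_m => b) N P F a z)
      - \rsum_(al < m) (P al z * adj (fun b : 'I_m => b) N Q F al z)
      = \rsum_(i < n) Dt i (Psi (fun b : 'I_m => b) N P Q F i) z) /\
  onE F (fun z => \rsum_(i < n) Dt i (Psi (fun b : 'I_m => b) N P Q F i) z).
Proof.
have HF' : forall a, diff_fun (F a) by move=> a; exists N; exact: HF.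
split; first by move=> z; exact: conj1.
split; first by move=> i z; exact: conj2.
split; first by move=> z; exact: conj3.
move=> z hz; rewrite -conj3 //.
rewrite big1; last by move=> a _; rewrite (Hsym a z hz); ring.
rewrite big1; last by move=> al _; rewrite (Hadj al z hz); ring.
ring.
Qed.
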